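(* For every graph $G$ and every integer $\ell\ge 0$, a set $B\subseteq V(G)$ is an $\ell$-leaky forcing set of $G$ if and only if it is a specified $\ell$-leaky forcing set of $G$. In particular $\operatorname{Z}^s_{(\ell)}(G)=\operatorname{Z}_{(\ell)}(G)$.
   Context: All graphs are finite, simple and undirected. Zero forcing: a blue vertex $u$ with exactly one white neighbor $w$ may force $w$ (color it blue), written $u\to w$. A vertex leak is a vertex not allowed to perform any force; $B$ is an $\ell$-leaky forcing set if for every set of at most $\ell$ vertex leaks, exhaustively applying the forcing rule from initial blue set $B$ colors all of $V(G)$ blue. A specified leak is an ordered pair $v\to u$ indicating that $v$ is prohibited from forcing $u$; $B$ is a specified $\ell$-leaky forcing set if for every set of at most $\ell$ specified leaks, $B$ colors all of $V(G)$ blue without performing prohibited forces. $\operatorname{Z}_{(\ell)}(G)$ and $\operatorname{Z}^s_{(\ell)}(G)$ denote the minimum sizes of an $\ell$-leaky forcing set and a specified $\ell$-leaky forcing set, respectively. *)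

(* Defs.v *)
From mathcomp Require Import all_boot.
Set Implicit Arguments. Unset Strict Implicit. Unset Printing Implicit Defensive.

Definition simple_graph (T : finType) (e : rel T) : Prop :=
  symmetric e /\ irreflexive e.

(* One round of applying the zero forcing rule in parallel, where
   [allowed u w] says whether u is permitted to force w. *)
Definition force_step (T : finType) (e : rel T) (allowed : T -> T -> bool)
  (S : {set T}) : {set T} :=
  S :|: [set w | [exists u, [&& u \in S, allowed u w, e u w &
                   [forall x, (e u x && (x != w)) ==> (x \in S)]]]].

(* Final blue set after exhaustively applying the forcing rule
   (#|T| rounds suffice to reach the fixpoint). *)
Definition force_closure (T : finType) (e : rel T) (allowed : T -> T -> bool)
  (B : {set T}) : {set T} :=
  iter #|T| (force_step e allowed) B.

Definition forces_all (T : finType) (e : rel T) (allowed : T -> T -> bool)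
  (B : {set T}) : bool :=
  force_closure e allowed B == [set: T].

Definition leaky_forcing_set (T : finType) (e : rel T) (l : nat) (B : {set T}) : bool :=
  [forall L : {set T}, (#|L| <= l) ==> forces_all e (fun u _ => u \notin L) B].

Definition spec_leaky_forcing_set (T : finType) (e : rel T) (l : nat) (B : {set T}) : bool :=
  [forall P : {set T * T}, (#|P| <= l) ==> forces_all e (fun u w => (u, w) \notin P) B].

(* Minimum sizes.  V(G) itself is always such a set, so #|T| is a valid
   initial value for the minimum. *)
Definition Z_leaky (T : finType) (e : rel T) (l : nat) : nat :=
  \big[minn/#|T|]_(B : {set T} | leaky_forcing_set e l B) #|B|.

Definition Z_spec_leaky (T : finType) (e : rel T) (l : nat) : nat :=
  \big[minn/#|T|]_(B : {set T} | spec_leaky_forcing_set e l B) #|B|.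

(* Main.v *)
Require Import Defs.
From mathcomp Require Import all_boot.

Section Aux.
Variables (T : finType) (e : rel T).

Lemma step_mono (a1 a2 : T -> T -> bool) (S1 S2 : {set T}) :
  (forall u w, a1 u w -> a2 u w) -> S1 \subset S2 ->
  force_step e a1 S1 \subset force_step e a2 S2.
Proof.
move=> Ha sub; apply/subsetP => w; rewrite !inE.
case/orP => [Hw | /existsP [u /and4P [Hu Hau Hew /forallP Hx]]].
  by rewrite (subsetP sub _ Hw).
apply/orP; right; apply/existsP; exists u.
rewrite (subsetP sub u Hu) (Ha _ _ Hau) Hew /=.
apply/forallP => x; apply/implyP => Hx'; apply: (subsetP sub).
exact: (implyP (Hx x) Hx').
Qed.

Lemma iter_mono (a1 a2 : T -> T -> bool) (S1 S2 : {set T}) k :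
  (forall u w, a1 u w -> a2 u w) -> S1 \subset S2 ->
  iter k (force_step e a1) S1 \subset iter k (force_step e a2) S2.
Proof.
move=> Ha sub; elim: k => [|k IH] //=; exact: step_mono.
Qed.

Lemma step_ext (a : T -> T -> bool) (S : {set T}) : S \subset force_step e a S.
Proof. exact: subsetUl. Qed.

Lemma closure_fix (a : T -> T -> bool) B :
  force_step e a (force_closure e a B) \subset force_closure e a B.
Proof.
set f := force_step e a.
have Q : forall k, (f (iter k f B) \subset iter k f B) \/ k <= #|iter k f B|.
  elim=> [|k IH]; first by right.
  case Hk: (f (iter k f B) \subset iter k f B).
    left; have E : iter k.+1 f B = iter k f B.
      by apply/eqP; rewrite eqEsubset Hk step_ext.
    by rewrite E.
  right; case: IH => [H|H]; first by rewrite H in Hk.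
  have Hp : iter k f B \proper iter k.+1 f B.
    by rewrite properE /= step_ext Hk.
  exact: leq_ltn_trans H (proper_card Hp).
rewrite /force_closure; case: (Q #|T|) => // H.
have E : iter #|T| f B = [set: T].
  by apply/eqP; rewrite eqEcard subsetT cardsT H.
by rewrite E subsetT.
Qed.

End Aux.

Theorem corollary3p2 (T : finType) (e : rel T) (l : nat) :
  simple_graph e ->
  (forall B : {set T}, leaky_forcing_set e l B <-> spec_leaky_forcing_set e l B) /\
  Z_spec_leaky e l = Z_leaky e l.
Proof.
move=> _.
have EQ : forall B : {set T}, leaky_forcing_set e l B <-> spec_leaky_forcing_set e l B.
  move=> B; split.
  - move/forallP => HL; apply/forallP => P; apply/implyP => HP.
    pose L := [set p.1 | p in P].
    have HLc : #|L| <= l by apply: leq_trans (leq_imset_card _ _) HP.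
    have := implyP (HL L) HLc; rewrite /forces_all /force_closure => /eqP HF.
    apply/eqP; apply/eqP; rewrite eqEsubset subsetT /= -HF.
    apply: iter_mono => // u w Hu; apply/negP => Hp; move/negP: Hu; apply.
    by apply/imsetP; exists (u, w).
  - move/forallP => HP; apply/forallP => L; apply/implyP => HL.
    set F := force_closure e (fun u _ => u \notin L) B.
    pose P := [set p : T * T | [&& p.1 \in L, p.1 \in F, e p.1 p.2, p.2 \notin F &
                 [forall x, (e p.1 x && (x != p.2)) ==> (x \in F)]]].
    have inj : {in P &, injective (fun p : T * T => p.1)}.
      move=> [u w] [u' w']; rewrite !inE /= => /and5P [_ _ _ HwF Hx]
        /and5P [_ _ Hew' Hw'F _] Eu; subst u'.
      case: (eqVneq w' w) => [->//|Hne].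
      by move: (implyP (forallP Hx w')); rewrite Hew' Hne (negbTE Hw'F) => /(_ isT).
    have HPc : #|P| <= l.
      rewrite -(card_in_imset inj); apply: leq_trans HL; apply: subset_leq_card.
      by apply/subsetP => u /imsetP [[v w]]; rewrite inE /= => /and5P [? _ _ _ _] ->.
    have HFix := @closure_fix _ e (fun u _ => u \notin L) B.
    have HPF : force_step e (fun u w => (u, w) \notin P) F \subset F.
      apply/subsetP => w; rewrite !inE => /orP [//|].
      move=> /existsP [u /and4P [Hu Ha Hew Hx]].
      apply/negPn/negP => HwF.
      case HuL: (u \in L).
        move/negP: Ha; apply; rewrite inE /= HuL Hu Hew HwF /=; exact: Hx.
      apply: (negP HwF); apply: (subsetP HFix); rewrite !inE; apply/orP; right; apply/existsP; exists u.
      by rewrite Hu HuL Hew.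
    have Hsub : forall k, iter k (force_step e (fun u w => (u, w) \notin P)) B \subset F.
      elim=> [|k IH] /=.
        rewrite /F /force_closure; elim: #|T| => [|n IHn] //=.
        exact: subset_trans IHn (step_ext _ _ _ _).
      by apply: subset_trans HPF; apply: step_mono.
    have := implyP (HP P) HPc; rewrite /forces_all /force_closure => /eqP HT.
    apply/eqP; apply/eqP; rewrite eqEsubset subsetT /=.
    by rewrite -HT; apply: Hsub.
split=> //.
rewrite /Z_spec_leaky /Z_leaky; apply: eq_bigl => B.
by apply/idP/idP => /EQ.
Qed.
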